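(* Let $T$ be a tree with positive edge weights rooted at the homebase $r$, and let $q\ge 0$. In every cost-optimal strategy exploring $T$, every agent terminates in a leaf of $T$ (its last visited vertex is a leaf), and every leaf is visited exactly once.
   Context: Exploration model: given a connected graph with positive edge weights, a homebase vertex, and invoking cost $q\ge 0$, a strategy is a sequence of moves, each either invoking a new agent (appearing at the homebase) or an agent traversing an edge incident to its current vertex. A vertex is explored when first visited; the strategy explores the graph when every vertex has been visited by some agent (agents need not return). With $k$ agents, agent $i$ traversing total distance $d_i$ (weights counted with multiplicity), the cost is $kq+\sum_i d_i$; a strategy is cost-optimal if it explores the graph with minimum cost (off-line setting). A leaf of the rooted tree is a non-root vertex with no children. *)

(* Defs.v *)
From mathcomp Require Import all_boot all_order all_algebra.
Set Implicit Arguments. Unset Strict Implicit. Unset Printing Implicit Defensive.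
Import Order.TTheory GRing.Theory Num.Theory.
Local Open Scope ring_scope.

(* ---------------- Rooted trees ----------------
   A tree rooted at the homebase r on the finite vertex set V is given by its
   parent map p : V -> V: p r = r and iterating p from any vertex reaches r.
   (Hence the graph with edges {v, p v}, v <> r, is a tree.)  The weight of
   the edge {v, p v} (v <> r) is w v. *)
Definition rooted_tree (V : finType) (r : V) (p : V -> V) : Prop :=
  p r = r /\ forall v : V, exists n : nat, iter n p v = r.

Definition is_child (V : finType) (r : V) (p : V -> V) (u v : V) : bool :=
  (v != r) && (p v == u).

Definition is_leaf (V : finType) (r : V) (p : V -> V) (v : V) : bool :=
  (v != r) && [forall u : V, ~~ is_child r p v u].

Definition adjacent (V : finType) (r : V) (p : V -> V) (u v : V) : bool :=
  is_child r p u v || is_child r p v u.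

Definition edge_weight (V : finType) (R : pzRingType) (r : V) (p : V -> V)
  (w : V -> R) (u v : V) : R :=
  if is_child r p u v then w v else w u.

(* Agents are numbered 0,1,2,... in the
   order in which they are invoked.  [Invoke] invokes a new agent, which
   appears at the homebase r; [Traverse i v] moves agent i along the edge
   from its current vertex to the adjacent vertex v. *)
Inductive move (V : Type) := Invoke | Traverse of nat & V.
Arguments Invoke {V}.

(* [pos] lists the current positions of the agents invoked so far. *)
Definition legal (V : finType) (r : V) (p : V -> V) (pos : seq V) (m : move V)
  : bool :=
  match m with
  | Invoke => true
  | Traverse i v => (i < size pos)%N && adjacent r p (nth r pos i) v
  end.

Definition step (V : finType) (r : V) (pos : seq V) (m : move V) : seq V :=
  match m with
  | Invoke => rcons pos r
  | Traverse i v => set_nth r pos i v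
  end.

Fixpoint valid (V : finType) (r : V) (p : V -> V) (pos : seq V)
  (s : seq (move V)) : bool :=
  match s with
  | [::] => true
  | m :: s' => legal r p pos m && valid r p (step r pos m) s'
  end.

(* The list of all visits (agent, vertex arrived at), in chronological order;
   an invoked agent visits the homebase when it appears. *)
Fixpoint arrivals (V : finType) (r : V) (pos : seq V) (s : seq (move V))
  : seq (nat * V) :=
  match s with
  | [::] => [::]
  | m :: s' =>
      (match m with
       | Invoke => (size pos, r)
       | Traverse i v => (i, v)
       end) :: arrivals r (step r pos m) s'
  end.

Definition final_positions (V : finType) (r : V) (s : seq (move V)) : seq V :=
  foldl (step r) [::] s.

Definition is_invoke (V : Type) (m : move V) : bool :=
  if m is Invoke then true else false.

Definition num_agents (V : Type) (s : seq (move V)) : nat := count (@is_invoke V) s.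

Definition never_moves (V : Type) (i : nat) (s : seq (move V)) : bool :=
  all (fun m => if m is Traverse j _ then j != i else true) s.

Fixpoint travel (V : finType) (R : pzRingType) (r : V) (p : V -> V) (w : V -> R)
  (pos : seq V) (s : seq (move V)) : R :=
  match s with
  | [::] => 0
  | m :: s' =>
      (if m is Traverse i v then edge_weight r p w (nth r pos i) v else 0)
      + travel r p w (step r pos m) s'
  end.

Definition cost (V : finType) (R : pzRingType) (r : V) (p : V -> V) (w : V -> R)
  (q : R) (s : seq (move V)) : R :=
  (num_agents s)%:R * q + travel r p w [::] s.

Definition explores (V : finType) (r : V) (p : V -> V) (s : seq (move V)) : Prop :=
  valid r p [::] s /\ forall v : V, v \in map snd (arrivals r [::] s).

Definition cost_optimal (V : finType) (R : numDomainType) (r : V) (p : V -> V)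
  (w : V -> R) (q : R) (s : seq (move V)) : Prop :=
  explores r p s /\
  forall s' : seq (move V), explores r p s' -> cost r p w q s <= cost r p w q s'.

(* Main.v *)
Require Import Defs.
From mathcomp Require Import all_boot all_order all_algebra.
From mathcomp Require Import zify lra.
Set Implicit Arguments. Unset Strict Implicit. Unset Printing Implicit Defensive.
Import Order.TTheory GRing.Theory Num.Theory.
Local Open Scope nat_scope.

Lemma valid_cat (V : finType) (r : V) (p : V -> V) pos s1 s2 :
  valid r p pos (s1 ++ s2) = valid r p pos s1 && valid r p (foldl (step r) pos s1) s2.
Proof. by elim: s1 pos => [|m s1 IH] pos //=; rewrite IH andbA. Qed.

Lemma arrivals_cat (V : finType) (r : V) pos s1 s2 :
  arrivals r pos (s1 ++ s2) = arrivals r pos s1 ++ arrivals r (foldl (step r) pos s1) s2.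
Proof. by elim: s1 pos => [|m s1 IH] pos //=; rewrite IH. Qed.

Lemma travel_cat (V : finType) (R : pzRingType) (r : V) p (w : V -> R) pos s1 s2 :
  travel r p w pos (s1 ++ s2) = (travel r p w pos s1 + travel r p w (foldl (step r) pos s1) s2)%R.
Proof. by elim: s1 pos => [|m s1 IH] pos /=; rewrite ?add0r // IH addrA. Qed.

Lemma nth_rcons_r (V : Type) (r : V) (s : seq V) n : nth r (rcons s r) n = nth r s n.
Proof.
rewrite nth_rcons; case: ltnP => // h; case: eqP => // _.
all: by rewrite nth_default.
Qed.

Lemma never_moves_nth (V : finType) (r : V) i pos s :
  never_moves i s -> nth r (foldl (step r) pos s) i = nth r pos i.
Proof.
elim: s pos => [|m s IH] pos //= /andP[hm hs]; rewrite IH //.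
case: m hm => [|j x] /=; first by rewrite nth_rcons_r.
by move=> hj; rewrite nth_set_nth /= eq_sym (negbTE hj).
Qed.

Definition agree (V : Type) (r : V) i (pos pos' : seq V) :=
  size pos = size pos' /\ forall j, j != i -> nth r pos j = nth r pos' j.

Lemma agree_lemma (V : finType) (R : pzRingType) (r : V) p (w : V -> R) i s pos pos' :
  never_moves i s -> agree r i pos pos' ->
  [/\ valid r p pos s = valid r p pos' s, travel r p w pos s = travel r p w pos' s,
      arrivals r pos s = arrivals r pos' s &
      agree r i (foldl (step r) pos s) (foldl (step r) pos' s)].
Proof.
elim: s pos pos' => [|m s IH] pos pos' /=; first by [].
move=> /andP[hm hs] [hsz hn].
have hag : agree r i (step r pos m) (step r pos' m).
  case: m hm => [|j x] /= hj; split.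
  - by rewrite !size_rcons hsz.
  - by move=> k hk; rewrite !nth_rcons_r hn.
  - by rewrite !size_set_nth hsz.
  - by move=> k hk; rewrite !nth_set_nth /=; case: eqP => // _; rewrite hn.
have [h1 h2 h3 h4] := IH _ _ hs hag.
split => //.
- rewrite h1; congr (_ && _); case: m hm {hag h1 h2 h3 h4} => [|j x] //= hj.
  by rewrite hsz hn // eq_sym.
- rewrite h2; congr (_ + _)%R; case: m hm {hag h1 h2 h3 h4} => [|j x] //= hj.
  by rewrite hn // eq_sym.
- by rewrite h3 hsz.
Qed.

Definition shiftk (i j : nat) := if j < i then j else j.+1.
Definition relab (i j : nat) := if i < j then j.-1 else j.
Definition relabm (V : Type) (i : nat) (m : move V) :=
  match m with Invoke => Invoke | Traverse j x => Traverse (relab i j) x end.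

Definition relrel (V : Type) (r : V) i (pos pos' : seq V) :=
  [/\ size pos = (size pos').+1, i <= size pos' &
      forall j, nth r pos' j = nth r pos (shiftk i j)].

Lemma shift_relab i j k : j != i -> (k == relab i j) = (shiftk i k == j).
Proof.
move=> /eqP hij; rewrite /shiftk /relab.
case: (ltnP i j) => h1; case: (ltnP k i) => h2; apply/eqP/eqP; lia.
Qed.

Lemma relab_lemma (V : finType) (R : pzRingType) (r : V) p (w : V -> R) i s pos pos' :
  never_moves i s -> relrel r i pos pos' -> valid r p pos s ->
  [/\ valid r p pos' (map (relabm i) s),
      travel r p w pos s = travel r p w pos' (map (relabm i) s),
      map snd (arrivals r pos s) = map snd (arrivals r pos' (map (relabm i) s)) &
      num_agents s = num_agents (map (relabm i) s)].
Proof.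
elim: s pos pos' => [|m s IH] pos pos' /=; first by [].
move=> /andP[hm hs] [hsz hi hn] /andP[hl hv].
case: m hm hl hv => [|j x] /= hj hl hv.
  have hr : relrel r i (rcons pos r) (rcons pos' r).
    split; rewrite ?size_rcons ?hsz //; first lia.
    by move=> k; rewrite !nth_rcons_r hn.
  have [h1 h2 h3 h4] := IH _ _ hs hr hv.
  by rewrite h1 h2 h3 h4.
move/andP: hl => [hjs hadj].
have hjs' : relab i j < size pos'.
  move: hjs hj; rewrite hsz /relab => hjs /eqP hj; case: (ltnP i j) => ?; lia.
have hnj : nth r pos j = nth r pos' (relab i j).
  rewrite hn; congr nth; move: hj => /eqP; rewrite /shiftk /relab.
  case: (ltnP i j) => ? ?; case: ltnP => ?; lia.
have hr : relrel r i (set_nth r pos j x) (set_nth r pos' (relab i j) x).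
  split.
  - rewrite !size_set_nth hsz; move: hjs'; rewrite hsz in hjs; lia.
  - rewrite size_set_nth; lia.
  - move=> k; rewrite !nth_set_nth /= shift_relab //.
    by case: eqP => // _; rewrite hn.
have [h1 h2 h3 h4] := IH _ _ hs hr hv.
by rewrite hjs' -hnj hadj h1 h2 h3 h4.
Qed.

Definition desc (V : Type) (p : V -> V) (v x : V) := exists n, iter n p x = v.

Definition dinv (V : finType) (r : V) p v (pos : seq V) (h : seq (nat * V)) :=
  forall j, desc p v (nth r pos j) -> (j, v) \in h.

Lemma dinv_step (V : finType) (r : V) p v pos h m :
  p r = r -> v != r -> legal r p pos m -> dinv r p v pos h ->
  dinv r p v (step r pos m) (rcons h (match m with Invoke => (size pos, r)
                                      | Traverse i x => (i, x) end)).
Proof.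
move=> pr vr; case: m => [|i x] /= hl hd j.
  rewrite nth_rcons_r => hj; rewrite mem_rcons in_cons hd ?orbT //.
rewrite nth_set_nth /=; case: eqP => [-> | _] hj; last first.
  by rewrite mem_rcons in_cons hd ?orbT.
rewrite mem_rcons in_cons; apply/orP.
case: (x =P v) => [->|xv]; first by left.
right; apply: hd; move: hl => /andP[_ /orP[]] /andP[xr /eqP px].
- case: hj => [[|n]] /= hn; first by case: xv.
  by exists n; rewrite -px -iterSr.
- case: hj => n hn; exists n.+1; by rewrite iterSr px.
Qed.

Lemma dinv_seq (V : finType) (r : V) p v pos h s :
  p r = r -> v != r -> valid r p pos s -> dinv r p v pos h ->
  dinv r p v (foldl (step r) pos s) (h ++ arrivals r pos s).
Proof.
move=> pr vr; elim: s pos h => [|m s IH] pos h /=; first by rewrite cats0.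
move=> /andP[hl hv] hd.
have := IH _ _ hv (dinv_step pr vr hl hd).
by rewrite cat_rcons.
Qed.

Lemma child_arrival (V : finType) (r : V) p v pos h s j c :
  p r = r -> v != r -> valid r p pos s -> dinv r p v pos h ->
  is_child r p v c -> (j, c) \in arrivals r pos s -> (j, v) \in h ++ arrivals r pos s.
Proof.
move=> pr vr + + hc; elim: s pos h => [|m s IH] pos h //=.
move=> /andP[hl hv] hd; rewrite in_cons => /orP[/eqP ha|hin].
  move: hc => /andP[cr /eqP pc].
  case: m ha hl {hv} => [[_ ec]|k x [<- <-]] /=; first by rewrite ec eqxx in cr.
  move=> /andP[_ /orP[]] /andP[_ /eqP hx].
    by rewrite mem_cat hd //; exists 0; rewrite /= -hx pc.
  by rewrite mem_cat hd //; exists 2; rewrite /= hx pc.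
have := IH _ _ hv (dinv_step pr vr hl hd) hin.
by rewrite cat_rcons.
Qed.

Lemma pos_visited (V : finType) (r : V) p pos s H :
  valid r p pos s -> (forall j, j < size pos -> nth r pos j \in H) ->
  forall j, j < size (foldl (step r) pos s) ->
     nth r (foldl (step r) pos s) j \in H ++ map snd (arrivals r pos s).
Proof.
elim: s pos H => [|m s IH] pos H /=; first by rewrite cats0.
move=> /andP[hl hv] hH j hj.
have := IH _ (rcons H (match m with Invoke => r | Traverse _ x => x end)) hv _ j hj.
rewrite cat_rcons; case: m hl {hv hj} => [|k x] //= hl; apply => i.
  rewrite size_rcons nth_rcons_r ltnS leq_eqVlt => /orP[/eqP ->|hi].
    by rewrite nth_default // mem_rcons mem_head.
  by rewrite mem_rcons in_cons hH ?orbT.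
move: hl => /andP[hk _]; rewrite size_set_nth nth_set_nth /=.
have -> : maxn k.+1 (size pos) = size pos by apply/maxn_idPr.
move=> hi; case: eqP => _; first by rewrite mem_rcons mem_head.
by rewrite mem_rcons in_cons hH ?orbT.
Qed.

Lemma size_foldl (V : finType) (r : V) p pos s :
  valid r p pos s -> size (foldl (step r) pos s) = size pos + num_agents s.
Proof.
elim: s pos => [|m s IH] pos /=; first by rewrite addn0.
move=> /andP[hl hv]; rewrite IH //; case: m hl {hv} => [|k x] /=.
  by rewrite size_rcons; lia.
move=> /andP[hk _]; rewrite size_set_nth add0n.
by have -> : maxn k.+1 (size pos) = size pos by apply/maxn_idPr.
Qed.

Lemma first_invoke (V : finType) (r : V) p s :
  valid r p [::] s -> 0 < size s -> r \in map snd (arrivals r [::] s).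
Proof. by case: s => [|[|k x] s] //= _ _; rewrite mem_head. Qed.

Lemma never_moves_arr (V : finType) (r : V) pos s i x :
  never_moves i s -> (i, x) \in arrivals r pos s -> x = r.
Proof.
elim: s pos => [|m s IH] pos //= /andP[hm hs]; rewrite in_cons => /orP[/eqP|].
  by case: m hm => [_ [_ ->]|k y /= hk [hh ->]] //; rewrite hh eqxx in hk.
by move/IH; apply.
Qed.

Lemma last_move (V : Type) i (s : seq (move V)) :
  never_moves i s \/ exists s1 v s2, s = s1 ++ Traverse i v :: s2 /\ never_moves i s2.
Proof.
elim: s => [|m s [IH|[s1 [v [s2 [-> h]]]]]]; first by left.
- case: m => [|k x]; first by left; exact: IH.
  case: (k =P i) => [->|/eqP hk]; last by left; rewrite /never_moves /= hk; exact: IH.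
  by right; exists [::], x, s.
- by right; exists (m :: s1), v, s2.
Qed.

Lemma first_move (V : Type) i (s : seq (move V)) :
  ~~ never_moves i s -> exists t1 y t2, s = t1 ++ Traverse i y :: t2 /\ never_moves i t1.
Proof.
rewrite /never_moves; elim: s => [|m s IH] //=.
case: m => [|k x] /=.
  by move/IH => [t1 [y [t2 [-> h]]]]; exists (Invoke :: t1), y, t2.
case: (k =P i) => [->|/eqP hk]; first by move=> _; exists [::], x, s.
rewrite /= => /IH [t1 [y [t2 [-> h]]]].
by exists (Traverse k x :: t1), y, t2; rewrite /= hk.
Qed.

Lemma split_invoke (V : Type) i (s : seq (move V)) :
  i < num_agents s -> exists s1 s2, s = s1 ++ Invoke :: s2 /\ num_agents s1 = i.
Proof.
elim: s i => [|m s IH] i //=.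
case: m => [|k x] /=; last by move/IH => [s1 [s2 [-> h]]]; exists (Traverse k x :: s1), s2.
case: i => [|i]; first by exists [::], s.
rewrite /num_agents /= -/(num_agents s) ltnS => /IH [s1 [s2 [-> h]]].
by exists (Invoke :: s1), s2; rewrite /num_agents /= -/(num_agents s1) h.
Qed.

Lemma split_visit (V : finType) (r : V) pos s v :
  v != r -> v \in map snd (arrivals r pos s) ->
  exists s1 i s2, s = s1 ++ Traverse i v :: s2.
Proof.
move=> vr; elim: s pos => [|m s IH] pos //=; rewrite in_cons => /orP[/eqP|].
  case: m => [ev|k x ->]; first by rewrite ev eqxx in vr.
  by exists [::], k, s.
by move/IH => [s1 [i [s2 ->]]]; exists (m :: s1), i, s2.
Qed.

Lemma split_second (V : finType) (r : V) pos s v :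
  v != r -> 1 < count (fun a : nat * V => a.2 == v) (arrivals r pos s) ->
  exists s1 i s2, s = s1 ++ Traverse i v :: s2 /\
     v \in map snd (arrivals r pos s1).
Proof.
move=> vr; elim: s pos => [|m s IH] pos //=.
case: eqP => [ha|_] /=.
  rewrite add1n ltnS -has_count => /hasP [a ha2 /eqP ha3].
  have : v \in map snd (arrivals r (step r pos m) s).
    by apply/mapP; exists a.
  move/(split_visit vr) => [s1 [i [s2 ->]]].
  by exists (m :: s1), i, s2; split => //=; rewrite in_cons ha eqxx.
rewrite add0n => /IH [s1 [i [s2 [-> h]]]].
by exists (m :: s1), i, s2; split => //=; rewrite in_cons h orbT.
Qed.
Local Open Scope ring_scope.

Lemma ew_pos (R : numDomainType) (V : finType) (r : V) p (w : V -> R) x y :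
  (forall v : V, v != r -> 0 < w v) -> adjacent r p x y -> 0 < edge_weight r p w x y.
Proof.
move=> wp; rewrite /edge_weight /adjacent; case: ifP => [/andP[yr _]|_] /=.
  by move=> _; apply: wp.
by move=> /andP[xr _]; apply: wp.
Qed.

Lemma card_not1 (V : finType) (r : V) : #|V| <> 1%N -> exists x, x != r.
Proof.
move=> h; case: (pickP (fun x => x != r)) => [x hx|h0]; first by exists x.
exfalso; apply: h; apply: (@eq_card1 _ r) => x; rewrite !inE.
by have := h0 x; rewrite /= => /negbFE ->.
Qed.

Lemma num_agents_cat (V : Type) (s1 s2 : seq (move V)) :
  num_agents (s1 ++ s2) = (num_agents s1 + num_agents s2)%N.
Proof. by rewrite /num_agents count_cat. Qed.

Lemma delete_last (R : realDomainType) (V : finType) (r : V) p (w : V -> R) q s1 i v s2 :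
  (forall v, v != r -> 0 < w v) -> explores r p (s1 ++ Traverse i v :: s2) -> never_moves i s2 ->
  v \in map snd (arrivals r [::] s1) ++
        map snd (arrivals r (set_nth r (foldl (step r) [::] s1) i v) s2) ->
  explores r p (s1 ++ s2) /\ cost r p w q (s1 ++ s2) < cost r p w q (s1 ++ Traverse i v :: s2).
Proof.
move=> wp [hv hc] hnm hvin.
set P := foldl (step r) [::] s1.
move: hv; rewrite valid_cat /= -/P => /andP[hv1 /andP[/andP[hi hadj] hv2]].
have hag : agree r i (set_nth r P i v) P.
  split; first by rewrite size_set_nth; apply/maxn_idPr.
  by move=> j hj; rewrite nth_set_nth /= (negbTE hj).
have [e1 e2 e3 _] := agree_lemma p w hnm hag.
split.
  split; first by rewrite valid_cat hv1 -/P -e1.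
  move=> x; have := hc x; rewrite arrivals_cat /= -/P map_cat /= mem_cat in_cons.
  rewrite arrivals_cat map_cat mem_cat -/P -e3.
  case/orP => [->//|/orP[/eqP ->|->]]; last by rewrite orbT.
  by rewrite -mem_cat.
rewrite /cost !num_agents_cat /= !travel_cat /= -/P -e2.
have := ew_pos wp hadj; set e := edge_weight _ _ _ _ _.
move=> he; rewrite add0n; lra.
Qed.

Lemma delete_pair (R : realDomainType) (V : finType) (r : V) p (w : V -> R) q s1 i v t1 y t2 :
  (forall v, v != r -> 0 < w v) -> explores r p (s1 ++ Traverse i v :: t1 ++ Traverse i y :: t2) ->
  never_moves i t1 ->
  y = nth r (foldl (step r) [::] s1) i ->
  v \in map snd (arrivals r [::] s1) ->
  explores r p (s1 ++ t1 ++ t2) /\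
  cost r p w q (s1 ++ t1 ++ t2) < cost r p w q (s1 ++ Traverse i v :: t1 ++ Traverse i y :: t2).
Proof.
move=> wp [hv hc] hnm hy hvin.
set P := foldl (step r) [::] s1.
move: hv; rewrite valid_cat /= -/P => /andP[hv1 /andP[/andP[hi hadj] hv2]].
set P1 := set_nth r P i v.
have hag : agree r i P1 P.
  split; first by rewrite size_set_nth; apply/maxn_idPr.
  by move=> j hj; rewrite nth_set_nth /= (negbTE hj).
have [e1 e2 e3 [hsz hn]] := agree_lemma p w hnm hag.
set Q := foldl (step r) P1 t1.
set Q' := foldl (step r) P t1.
move: hv2; rewrite valid_cat /= -/Q => /andP[hv3 /andP[/andP[hi2 hadj2] hv4]].
have hQ : set_nth r Q i y = Q'.
  apply: (@eq_from_nth _ r).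
    by rewrite size_set_nth -hsz; apply/maxn_idPr.
  move=> k _; rewrite nth_set_nth /=; case: eqP => [->|/eqP hk]; last exact: hn.
  by rewrite hy -/P /Q' never_moves_nth.
have hyv : y \in map snd (arrivals r [::] s1).
  have := @pos_visited V r p [::] s1 [::] hv1 (fun j (h : (j < 0)%N) => ltac:(done)) i hi.
  by rewrite -/P -hy.
split.
  split.
    by rewrite valid_cat hv1 -/P valid_cat -e1 hv3 -/Q' -hQ.
  move=> x; have := hc x; rewrite arrivals_cat /= -/P -/P1 arrivals_cat /= -/Q.
  rewrite !map_cat /= !mem_cat !in_cons hQ.
  rewrite arrivals_cat -/P arrivals_cat -/Q' map_cat !mem_cat map_cat mem_cat -e3 -/P1.
  rewrite /= in_cons map_cat mem_cat.
  case/or4P => [->//|/eqP ->|->|/orP[/eqP ->|->]]; by rewrite ?orbT ?hvin ?hyv.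
rewrite /cost !num_agents_cat /= !num_agents_cat /= !travel_cat /= -/P -/P1.
rewrite !travel_cat /= -/Q -/Q' -e2 hQ.
have := ew_pos wp hadj; set ea := edge_weight _ _ _ _ _.
have := ew_pos wp hadj2; set eb := edge_weight _ _ _ _ _.
move=> hb ha; rewrite !add0n; lra.
Qed.

Theorem mainTheorem7 (R : realFieldType) (V : finType) (r : V) (p : V -> V)
  (w : V -> R) (q : R) (s : seq (move V)) :
  rooted_tree r p ->
  (forall v : V, v != r -> 0 < w v) ->
  0 <= q ->
  cost_optimal r p w q s ->
  (forall i : nat, (i < num_agents s)%N ->
     is_leaf r p (nth r (final_positions r s) i)
     \/ ((q = 0 \/ #|V| = 1%N) /\ never_moves i s))
  /\
  (forall v : V, is_leaf r p v ->
     count (fun a : nat * V => a.2 == v) (arrivals r [::] s) = 1%N).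
Proof.
move=> [pr hroot] wp q0 [[hval hcov] hopt].
have fixr : forall v, p v = v -> v = r.
  by move=> v pv; have [n] := hroot v; rewrite iter_fix.
split.
- move=> i hi.
  have [hnm|[s1 [v [s2 [es hnm]]]]] := last_move i s.
  + right; split => //.
    case: (q0); rewrite le_eqVlt => /orP[/eqP <-|qpos]; first by left.
    right; apply/eqP/negPn/negP => /eqP hV; exfalso.
    have [x0 hx0] := card_not1 r hV.
    have [s1 [s2 [es hn1]]] := split_invoke hi.
    rewrite {}es in hval hcov hopt hnm.
    move: hnm; rewrite /never_moves all_cat /= -!/(never_moves i _) => /andP[_ hnm2].
    move: hval; rewrite valid_cat /= => /andP[hv1 hv2].
    set P := foldl (step r) [::] s1 in hv2.
    have hsP : size P = i by rewrite /P (size_foldl hv1).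
    have hrel : relrel r i (rcons P r) P.
      split; rewrite ?size_rcons ?hsP // => j.
      rewrite nth_rcons_r /shiftk; case: ltnP => // hj.
      by rewrite !nth_default // hsP; lia.
    have [e1 e2 e3 e4] := relab_lemma w hnm2 hrel hv2.
    have hex : explores r p (s1 ++ map (relabm i) s2).
      split; first by rewrite valid_cat hv1 -/P.
      move=> x; have := hcov x; rewrite arrivals_cat /= -/P map_cat /= mem_cat in_cons.
      rewrite arrivals_cat -/P map_cat mem_cat -e3.
      case/or3P => [->//|/eqP ->|->]; last by rewrite orbT.
      have hfi := @first_invoke V r p (s1 ++ map (relabm i) s2).
      rewrite arrivals_cat map_cat mem_cat -/P in hfi; rewrite -e3 in hfi; apply: hfi.
        by rewrite valid_cat hv1 -/P.
      rewrite size_cat size_map.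
      move: (hcov x0); case: (s1) => [|m1 s1'] //=; case: (s2) => [|m2 s2'] //=.
      by rewrite inE (negbTE hx0).
    have := hopt _ hex; rewrite /cost !num_agents_cat /= -e4 !travel_cat /= -/P -e2.
    rewrite add0r natrD natrD mulrDl mulrDl; lra.
  + left; rewrite /final_positions es foldl_cat /= never_moves_nth // nth_set_nth /= eqxx.
    case hl: (is_leaf r p v) => //; exfalso.
    set P := foldl (step r) [::] s1.
    move: (hval); rewrite es valid_cat /= -/P => /andP[hv1 /andP[/andP[hiP hadj] hv2]].
    have hvin : ~~ (v \in map snd (arrivals r [::] s1) ++
                   map snd (arrivals r (set_nth r P i v) s2)).
      apply/negP => hin.
      have hexs : explores r p (s1 ++ Traverse i v :: s2) by rewrite -es; split.
      have [hex hlt] := delete_last q wp hexs hnm hin.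
      by have := hopt _ hex; rewrite {1}es leNgt hlt.
    move: hvin; rewrite mem_cat negb_or => /andP[hn1 hn2].
    have vr : v != r.
      apply/eqP => evr; move: hn1; rewrite evr (first_invoke hv1) //.
      by move: hiP; rewrite /P; case: (s1).
    have /forallPn [c] : ~~ [forall u, ~~ is_child r p v u].
      by move: hl; rewrite /is_leaf vr /= => ->.
    rewrite negbK => hc.
    have cr : c != r by case/andP: hc.
    have := hcov c; rewrite es arrivals_cat /= -/P => /mapP [[j c'] /= + ec]; rewrite -{c'}ec.
    rewrite mem_cat in_cons => /or3P [hin|/eqP [_ ecv]|hin].
    * have hd0 : dinv r p v [::] [::].
        move=> k [n]; rewrite nth_nil iter_fix // => /eqP; by rewrite eq_sym (negbTE vr).
      have := child_arrival pr vr hv1 hd0 hc hin.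
      by move=> hjv; move: hn1; rewrite (map_f snd hjv).
    * move: hc; rewrite ecv /is_child => /andP[_ /eqP /fixr]; by move/eqP: vr.
    * have hd0 : dinv r p v [::] [::].
        move=> k [n]; rewrite nth_nil iter_fix // => /eqP; by rewrite eq_sym (negbTE vr).
      have hd1 := dinv_seq pr vr hv1 hd0.
      have hd2 := dinv_step pr vr (_ : legal r p P (Traverse i v)) hd1.
      have := child_arrival pr vr hv2 (hd2 (introT andP (conj hiP hadj))) hc hin.
      rewrite /= mem_cat mem_rcons in_cons -orbA => /or3P [/eqP [ej]|hjv|hjv].
      -- rewrite ej in hin; have := never_moves_arr hnm hin.
         by move/eqP; rewrite (negbTE cr).
      -- by move: hn1; rewrite (map_f snd hjv).
      -- by move: hn2; rewrite (map_f snd hjv).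
- move=> v hl.
  have vr : v != r by case/andP: hl.
  have hpos : (0 < count (fun a : nat * V => a.2 == v) (arrivals r [::] s))%N.
    rewrite -has_count; have /mapP [a ha ea] := hcov v.
    by apply/hasP; exists a => //; rewrite ea.
  apply/eqP; rewrite eqn_leq hpos andbT leqNgt; apply/negP => h2.
  have [s1 [i [s2 [es hvs1]]]] := split_second vr h2.
  set P := foldl (step r) [::] s1.
  move: (hval); rewrite es valid_cat /= -/P => /andP[hv1 /andP[/andP[hiP hadj] hv2]].
  have leafadj : forall x, adjacent r p x v -> x = p v.
    move=> x /orP[/andP[_ /eqP ->] //|hc].
    by move: hl => /andP[_ /forallP /(_ x)]; rewrite hc.
  have leafadj2 : forall y, adjacent r p v y -> y = p v.
    move=> y /orP[hc|/andP[_ /eqP -> //]].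
    by move: hl => /andP[_ /forallP /(_ y)]; rewrite hc.
  have [hnm|] := boolP (never_moves i s2).
    have hin : v \in map snd (arrivals r [::] s1) ++
                   map snd (arrivals r (set_nth r P i v) s2) by rewrite mem_cat hvs1.
    have hexs : explores r p (s1 ++ Traverse i v :: s2) by rewrite -es; split.
    have [hex hlt] := delete_last q wp hexs hnm hin.
    by have := hopt _ hex; rewrite {1}es leNgt hlt.
  move/first_move => [t1 [y [t2 [es2 hnm1]]]].
  rewrite es2 in es.
  move: hv2; rewrite es2 valid_cat /= => /andP[hv3 /andP[/andP[_ hadj2] _]].
  rewrite never_moves_nth // nth_set_nth /= eqxx in hadj2.
  have hy : y = nth r (foldl (step r) [::] s1) i.
    by rewrite (leafadj2 _ hadj2) -/P (leafadj _ hadj).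
  have hexs : explores r p (s1 ++ Traverse i v :: t1 ++ Traverse i y :: t2).
    by rewrite -es; split.
  have [hex hlt] := delete_pair q wp hexs hnm1 hy hvs1.
  by have := hopt _ hex; rewrite {1}es leNgt hlt.
Qed.
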